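(* Let $K$ be a Cantor set with metric $d$. For every endomorphism $T:K\to K$ and every $\varepsilon>0$ there exists an endomorphism $\widetilde T:K\to K$ such that $D(T,\widetilde T)=\max_{x\in K} d(T(x),\widetilde T(x))<\varepsilon$ and the orbit of every point of $K$ under $\widetilde T$ is finally periodic.
   Context: A Cantor set is a nonempty totally disconnected, perfect, compact metric space. An endomorphism of $K$ is a continuous surjection $K\to K$. The orbit of $x\in K$ under a map $S$ is finally periodic if there exist integers $j,N>0$ with $S^{N+j}(x)=S^{j}(x)$. *)

(* Defs.v *)
From HB Require Import structures.
From mathcomp Require Import all_boot all_order all_algebra.
From mathcomp Require Import all_classical all_reals all_analysis.
Set Implicit Arguments. Unset Strict Implicit. Unset Printing Implicit Defensive.
Import Order.TTheory GRing.Theory Num.Theory.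
Local Open Scope classical_set_scope.
Local Open Scope ring_scope.

Definition is_metric_of {R : realType} (K : pseudoMetricType R)
  (d : K -> K -> R) : Prop :=
  [/\ (forall x y, d x y = 0 <-> x = y),
      (forall x y, d x y = d y x),
      (forall x y z, d x z <= d x y + d y z) &
      (forall (x : K) (e : R), ball x e = [set y | d x y < e])].

Definition cantor_set {R : realType} (K : pseudoMetricType R) : Prop :=
  [/\ [set: K] !=set0, totally_disconnected [set: K],
      perfect_set [set: K] & compact [set: K]].

Definition endomorphism {R : realType} (K : pseudoMetricType R) (T : K -> K) : Prop :=
  continuous T /\ (forall y, exists x, T x = y).

Definition finally_periodic {X : Type} (S : X -> X) (x : X) : Prop :=
  exists j N : nat, [/\ (0 < j)%N, (0 < N)%N & iter (N + j) S x = iter j S x].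

(* Main.v *)
Require Import Defs.
From HB Require Import structures.
From mathcomp Require Import all_boot all_order all_algebra.
From mathcomp Require Import all_classical all_reals all_analysis.
From mathcomp Require Import finmap zify ring lra.
Set Implicit Arguments. Unset Strict Implicit. Unset Printing Implicit Defensive.
Import Order.TTheory GRing.Theory Num.Theory.
Import numFieldNormedType.Exports.
Local Open Scope classical_set_scope.

(* Proof outline: K is zero-dimensional, hence homeomorphic to the Cantor
   space bool^nat; there T becomes S, and we build a continuous surjection S'
   agreeing with S on the first n coordinates, all of whose orbits are
   finally periodic (a finite "parent" graph on prefixes of length m). *)


Definition cyl (x : cantor_space) (n : nat) : set cantor_space :=
  [set y | forall i, (i < n)%N -> y i = x i].

Lemma cyl_nbhs (x : cantor_space) n : nbhs x (cyl x n).
Proof.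
elim: n => [|n IH].
  have -> : cyl x 0 = setT by apply/seteqP; split => // y _ i; rewrite ltn0.
  exact: filterT.
have : nbhs x (proj n @^-1` [set x n]).
  apply: open_nbhs_nbhs; split => //.
  apply: open_comp; [move=> + _; exact: proj_continuous| apply: discrete_open].
move=> H; apply: filterS (filterI IH H) => y [Hy1 Hy2] i.
rewrite ltnS leq_eqVlt => /predU1P[->|]; [exact: Hy2 | exact: Hy1].
Qed.

Lemma cyl_base (x : cantor_space) A : nbhs x A -> exists n, cyl x n `<=` A.
Proof.
pose G := filter_from [set: nat] (cyl x).
have GF : Filter G.
  apply: filter_from_filter; first by exists 0%N.
  move=> i j _ _; exists (maxn i j) => // y Hy; split => k Hk; apply: Hy.
    by apply: leq_trans Hk (leq_maxl _ _).
  by apply: leq_trans Hk (leq_maxr _ _).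
suff : G --> x by move=> /(_ A) H /H [n _ ?]; exists n.
apply/cvg_sup => i.
move=> B /=.
rewrite (@nbhsE (initial_topology (fun f : cantor_space => f i))) /=.
move=> [V [oV Vx] VB].
case: oV => U oU EU.
exists i.+1 => // y Hy; apply: VB; rewrite -EU /=.
by rewrite Hy //; move: Vx; rewrite -EU.
Qed.


Lemma cyl_open (x : cantor_space) n : open (cyl x n).
Proof.
rewrite openE => y Hy; rewrite /interior.
apply: filterS (cyl_nbhs y n) => z Hz i Hi; rewrite Hz // Hy //.
Qed.

Lemma cyl_cont (h : cantor_space -> cantor_space) :
  (forall x n, exists k, forall y, cyl x k y -> cyl (h x) n (h y)) ->
  continuous h.
Proof.
move=> H x B /cyl_base [n Hn]; have [k Hk] := H x n.
by apply: filterS (cyl_nbhs x k) => y /Hk /Hn.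
Qed.

Lemma cyl_unif (Y : topologicalType) (h : cantor_space -> Y)
  (E : Y -> Y -> Prop) :
  continuous h -> (forall y, nbhs y (E y)) ->
  exists n, forall a b, cyl a n b -> exists c, E (h c) (h a) /\ E (h c) (h b).
Proof.
move=> hc hE.
have nc_ex c : exists n, cyl c n `<=` h @^-1` (E (h c)).
  apply: cyl_base; exact: hc (hE (h c)).
pose nc c := projT1 (cid (nc_ex c)).
have ncP c : cyl c (nc c) `<=` h @^-1` (E (h c)) := projT2 (cid (nc_ex c)).
have := cantor_space_compact; rewrite compact_cover.
move=> /(_ cantor_space setT (fun c => cyl c (nc c))) [].
- by move=> c _; exact: cyl_open.
- by move=> c _; exists c => //.
move=> D' _ HD'.
exists (\max_(c <- (D' : seq _)) nc c) => a b Hab.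
have [c /= cD' Hca] := HD' a I.
have Hle : (nc c <= \max_(c <- (D' : seq _)) nc c)%N by apply: leq_bigmax_seq.
exists c; split; first exact: ncP.
apply: ncP => i Hi; rewrite Hab; first exact: Hca.
exact: leq_trans Hi Hle.
Qed.

Lemma td_zd (T : topologicalType) : hausdorff_space T -> compact [set: T] ->
  totally_disconnected [set: T] -> zero_dimensional T.
Proof.
move=> hT cT tdT x y xy.
apply: contrapT => nU.
pose Q := [set z | forall Uo, clopen Uo -> Uo x -> Uo z].
have Qx : Q x by [].
have Qy : Q y.
  move=> Uo cU Ux; by apply: contrapT => nUy; apply: nU; exists Uo; split.
have QE : Q = \bigcap_(Uo in [set Uo | clopen Uo /\ Uo x]) Uo.
  apply/seteqP; split => z Hz.
    by move=> V [cV Vx]; exact: Hz.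
  by move=> V cV Vx; apply: Hz.
have Qcl : closed Q by rewrite QE; apply: closed_bigI => V [[_ clV] _].
have key : forall A B : set T, closed A -> closed B -> A `&` B = set0 ->
    Q = A `|` B -> A x -> B !=set0 -> False.
  move=> A B clA clB AB QAB Ax [b Bb].
  have snB : set_nbhs A (~` B).
    apply/set_nbhsP; exists (~` B); split => //; first exact: closed_openC.
    by move=> a Aa Ba; have : (A `&` B) a by []; rewrite AB.
  have [C snC clCB] := compact_normal hT cT clA snB.
  case/set_nbhsP: snC => Uo [oU AU UC].
  pose V := ~` closure C.
  have oV : open V by apply: closed_openC; exact: closed_closure.
  have BV : B `<=` V by move=> z Bz /clCB.
  have UV : forall z, Uo z -> V z -> False.
    by move=> z /UC /subset_closure.
  pose Z := ~` (Uo `|` V).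
  have clZ : closed Z by apply: open_closedC; exact: openU.
  have [W [cW Wx WZ]] : exists W, [/\ clopen W, W x & W `&` Z = set0].
    apply: contrapT => nW.
    pose F := filter_from [set W | clopen W /\ W x] (fun W => W `&` Z).
    have FF : ProperFilter F.
      apply: filter_from_proper; first apply: filter_from_filter.
      - by exists setT; split => //; exact: clopenT.
      - move=> W1 W2 [c1 x1] [c2 x2]; exists (W1 `&` W2).
          by split; [exact: clopenI | split].
        by move=> z [[? ?] ?].
      - move=> W [cW Wx]; by apply/set0P/eqP => HW; apply: nW; exists W; split.
    have cZ : compact Z by apply: (subclosed_compact clZ cT).
    have FZ : F Z by exists setT; [split => //; exact: clopenT | move=> z []].
    have [z [Zz clz]] := cZ F FF FZ.
    have Qz : Q z.
      move=> W cW Wx; apply: contrapT => nWz.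
      have FW : F (W `&` Z) by exists W.
      have nb : nbhs z (~` W).
        apply: open_nbhs_nbhs; split => //; apply: closed_openC; by case: cW.
      by have [w [[Ww _] nWw]] := clz _ _ FW nb.
    move: Qz; rewrite QAB => -[/AU|/BV] => HU; apply: Zz; by [left|right].
  have WUV : W `<=` Uo `|` V.
    move=> w Ww; apply: contrapT => nUV.
    by have : (W `&` Z) w by []; rewrite WZ.
  have cW' : clopen (W `&` Uo).
    case: cW => oW clW; split; first exact: openI.
    have -> : W `&` Uo = W `&` ~` V.
      apply/seteqP; split => w [Ww Hw]; split => //.
        by move=> Vw; apply: (UV w).
      by case: (WUV w Ww).
    by apply: closedI => //; exact: open_closedC.
  have Qb : Q b by rewrite QAB; right.
  have [_ Ub] := Qb _ cW' (conj Wx (AU _ Ax)).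
  exact: (UV b Ub (BV _ Bb)).
have Qconn : connected Q.
  apply/connectedP => E [E0 QE' [sep1 sep2]].
  have clE b : closed (E b).
    rewrite closure_id; apply/seteqP; split; first exact: subset_closure.
    move=> z cz.
    have : Q z.
      rewrite (closure_id Q).1 //.
      by apply: (closureS _ cz); rewrite QE'; case: b {cz} => ? ?; [right|left].
    rewrite QE' => -[] Hz; case: b cz => //= cz; exfalso.
    + have : (E false `&` closure (E true)) z by split.
      by rewrite sep2.
    + have : (closure (E false) `&` E true) z by split.
      by rewrite sep1.
  have disj : E false `&` E true = set0.
    apply/seteqP; split => // z [z0 z1].
    have : (closure (E false) `&` E true) z by split => //; exact: subset_closure.
    by rewrite sep1.
  have : Q x by [].
  rewrite QE' => -[Hx|Hx].
    by apply: (key (E false) (E true)) => //.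
  apply: (key (E true) (E false)) => //.
    by rewrite setIC.
  by rewrite setUC.
have := connected_component_max Qx (@subsetT _ Q) Qconn.
rewrite tdT // => /(_ y Qy) Hyx.
by move: xy; rewrite -Hyx eqxx.
Qed.


Definition Per {X : Type} (f : X -> X) (x : X) :=
  exists j N : nat, (0 < N)%N /\ iter (N + j) f x = iter j f x.

Lemma Per_iter {X : Type} (f : X -> X) x t : Per f (iter t f x) -> Per f x.
Proof.
move=> [j [N [N0 H]]]; exists (j + t), N; split => //.
by rewrite addnA iterD H -iterD.
Qed.

Lemma pigeon (V : finType) (g : nat -> V) t :
  exists k l, [/\ (t <= k)%N, (k < l)%N, (l <= t + #|V|)%N & g k = g l].
Proof.
pose h (i : 'I_#|V|.+1) := g (t + i).
have : ~ injective h.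
  move=> /leq_card; rewrite card_ord ltnn //.
move=> /existsNP [i1 /existsNP [i2 /not_implyP [E N]]].
have Hne : (i1 : nat) != i2 by apply/eqP => /val_inj.
case: (ltngtP i1 i2) => lt; last by move: Hne; rewrite lt eqxx.
  exists (t + i1), (t + i2); split => //; first exact: leq_addr.
    by rewrite ltn_add2l.
  by rewrite leq_add2l -ltnS.
exists (t + i2), (t + i1); split => //; first exact: leq_addr.
  by rewrite ltn_add2l.
by rewrite leq_add2l -ltnS.
Qed.

Lemma per_all {X : Type} (V : finType) (f : X -> X) (Z : V -> X) :
  (forall x, Per f x \/ exists t v, iter t.+1 f x = Z v) -> forall x, Per f x.
Proof.
move=> hyp.
suff HZ : forall v, Per f (Z v).
  move=> x; case: (hyp x) => // -[t [v E]]; apply: (Per_iter (t := t.+1)).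
  by rewrite E.
pose R v v' := exists t, iter t.+1 f (Z v) = Z v'.
have sig v : exists v', (exists v'', R v v'') -> R v v'.
  case: (pselect (exists v'', R v v'')) => [[v'' H]|H]; first by exists v''.
  by exists v => /H.
pose s v := projT1 (cid (sig v)).
have sP v : (exists v'', R v v'') -> R v (s v) := projT2 (cid (sig v)).
move=> v0; apply: contrapT => nP.
pose a k := iter k s v0.
have bad k : ~ Per f (Z (a k)) /\ R (a k) (a k.+1).
  elim: k => [|k [IH1 IH2]].
    split => //; apply: sP; case: (hyp (Z v0)) => // -[t [v E]].
    by exists v, t.
  have nb : ~ Per f (Z (a k.+1)).
    move=> HP; apply: IH1; case: IH2 => t E; apply: (Per_iter (t := t.+1)).
    by rewrite E.
  split => //; apply: sP; case: (hyp (Z (a k.+1))) => // -[t [v E]].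
  by exists v, t.
have reach k d : exists T, (d <= T)%N /\ iter T f (Z (a k)) = Z (a (k + d)).
  elim: d => [|d [T [HT E]]]; first by exists 0%N; rewrite addn0.
  have [_ [t Et]] := bad (k + d).
  exists (t.+1 + T); split; first by rewrite ltnS (leq_trans HT) // leq_addl.
  by rewrite iterD E addnS.
have [k [l [_ kl _ E]]] := pigeon a 0.
have [T [HT ET]] := reach k (l - k).
apply: (bad k).1; exists 0%N, T; split.
  by apply: leq_trans HT; rewrite subn_gt0.
by rewrite addn0 /= ET subnKC ?E // ltnW.
Qed.

Fixpoint sumf (f : nat -> nat) (t k : nat) : nat :=
  if k is k'.+1 then f t + sumf f t.+1 k' else 0.

Lemma sumf_S f t k : sumf f t k.+1 = sumf f t k + f (t + k).
Proof.
elim: k t => [|k IH] t; first by rewrite /= !addn0.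
rewrite -[LHS]/(f t + sumf f t.+1 k.+1) IH.
rewrite -[sumf f t k.+1]/(f t + sumf f t.+1 k).
have -> : t + k.+1 = t.+1 + k by rewrite addSnnS.
lia.
Qed.

Lemma sumf_add f t k1 k2 : sumf f t (k1 + k2) = sumf f t k1 + sumf f (t + k1) k2.
Proof.
elim: k1 t => [|k IH] t /=; first by rewrite addn0.
by rewrite IH addnA addSnnS.
Qed.

Lemma sumf_per f M t k : (forall s, f (s + M) = f s) ->
  sumf f (t + M) k = sumf f t k.
Proof.
move=> H; elim: k t => [|k IH] t //=.
by rewrite H -addSn IH.
Qed.

Lemma sumf_mul f M q : (forall s, f (s + M) = f s) ->
  sumf f 0 (q * M) = q * sumf f 0 M.
Proof.
move=> H; elim: q => [|q IH] //.
by rewrite mulSn sumf_add sumf_per // IH mulSn.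
Qed.

Section Construction.
Variables (S : cantor_space -> cantor_space) (n m : nat).
Hypotheses (hnm : n <= m) (Ssurj : forall y, exists x, S x = y)
  (Sunif : forall a b, cyl a m b -> cyl (S a) n (S b)).

Local Notation V := (m.-tuple bool).

Definition pre (x : cantor_space) : V :=
  @Tuple m bool (mkseq x m) (introT eqP (size_mkseq x m)).
Definition app (v : V) (y : cantor_space) : cantor_space :=
  fun i => if i < m then nth false v i else y (i - m).
Definition sh (c : nat) (y : cantor_space) : cantor_space := fun i => y (i + c).
Definition ext (v : V) := app v (fun _ => false).

Lemma nth_pre x i : i < m -> nth false (pre x) i = x i.
Proof. by move=> Hi; rewrite /pre /= nth_mkseq. Qed.

Lemma pre_eq x y : (forall i, i < m -> y i = x i) -> pre x = pre y.
Proof.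
move=> H; apply: val_inj => /=; apply: (@eq_from_nth _ false).
  by rewrite !size_mkseq.
by move=> i; rewrite size_mkseq => Hi; rewrite !nth_mkseq // H.
Qed.

Lemma pre_app v y : pre (app v y) = v.
Proof.
apply: val_inj => /=; apply: (@eq_from_nth _ false).
  by rewrite size_mkseq size_tuple.
by move=> i; rewrite size_mkseq => Hi; rewrite nth_mkseq // /app Hi.
Qed.

Lemma sh_app v y c : sh (m + c) (app v y) = sh c y.
Proof.
apply: funext => i; rewrite /sh /app.
by rewrite addnA (addnC i m) -addnA ltnNge leq_addr /= addKn.
Qed.

Lemma sh_app0 v y : sh m (app v y) = y.
Proof.
apply: funext => i; rewrite /sh /app.
by rewrite ltnNge leq_addl /= addnK.
Qed.

Lemma app_pre x : app (pre x) (sh m x) = x.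
Proof.
apply: funext => i; rewrite /app /sh; case: ifP => Hi; first by rewrite nth_pre.
by rewrite subnK // leqNgt Hi.
Qed.

Lemma sh_sh a b y : sh a (sh b y) = sh (b + a) y.
Proof. by apply: funext => i; rewrite /sh -!addnA (addnC a b). Qed.

Lemma sh0 y : sh 0 y = y.
Proof. by apply: funext => i; rewrite /sh addn0. Qed.

Lemma ext_cyl x : cyl (ext (pre x)) m x.
Proof. by move=> i Hi; rewrite /ext /app Hi nth_pre. Qed.

Lemma par_ex (v : V) : exists w : V, forall i, i < n -> nth false v i = S (ext w) i.
Proof.
have [a Ea] := Ssurj (ext v); exists (pre a) => i Hi.
have := Sunif (ext_cyl a) Hi; rewrite Ea => <-.
by rewrite /ext /app (leq_trans Hi hnm).
Qed.

Definition par (v : V) : V := projT1 (cid (par_ex v)).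
Lemma parP (v : V) i : i < n -> nth false v i = S (ext (par v)) i.
Proof. exact: (projT2 (cid (par_ex v))). Qed.

Definition ch (w : V) : seq V := [seq v <- enum {: V} | par v == w].

Lemma mem_ch w v : (v \in ch w) = (par v == w).
Proof. by rewrite mem_filter mem_enum andbT. Qed.

Lemma uniq_ch w : uniq (ch w).
Proof. by apply: filter_uniq; exact: enum_uniq. Qed.

Definition B := size (enum {: V}).

Lemma size_ch w : size (ch w) <= B.
Proof. by rewrite size_filter count_size. Qed.

Definition jdx (r : nat) (y : cantor_space) := find (fun i => y i) (iota 0 r.-1).
Definition cons (r j : nat) := if j < r.-1 then j.+1 else r.-1.

Lemma jdx_le r y : jdx r y <= r.-1.
Proof. by rewrite /jdx -{2}(size_iota 0 r.-1) find_size. Qed.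

Lemma jdx_before r y i : i < jdx r y -> y i = false.
Proof.
move=> Hi; have := before_find 0 Hi; rewrite nth_iota ?add0n //.
exact: leq_trans Hi (jdx_le r y).
Qed.

Lemma jdx_at r y : jdx r y < r.-1 -> y (jdx r y) = true.
Proof.
move=> Hj; have : has (fun i => y i) (iota 0 r.-1).
  by rewrite has_find size_iota.
move=> /(nth_find 0); rewrite nth_iota ?add0n //.
Qed.

Lemma jdx_char r y j : j <= r.-1 -> (forall i, i < j -> y i = false) ->
  (j < r.-1 -> y j = true) -> jdx r y = j.
Proof.
move=> Hj Hb Ha.
case: (ltngtP (jdx r y) j) => // H.
- have Hlt : jdx r y < r.-1 by exact: leq_trans H Hj.
  by have := jdx_at Hlt; rewrite Hb.
- have Hlt : j < r.-1 by exact: leq_trans H (jdx_le r y).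
  by have := jdx_before H; rewrite Ha.
Qed.

Lemma jdx_eq r y z : (forall i, i < r.-1 -> y i = z i) -> jdx r y = jdx r z.
Proof.
move=> H; apply: eq_in_find => i; rewrite mem_iota add0n => /andP[_ Hi].
by rewrite H.
Qed.

Lemma cons_le r j : j <= r.-1 -> cons r j <= r.-1.
Proof. by rewrite /cons; case: ifP. Qed.

Lemma pat r y i : i < cons r (jdx r y) -> y i = (i == jdx r y).
Proof.
rewrite /cons; case: ifP => Hj Hi.
  case: (ltngtP i (jdx r y)) => H.
  - by rewrite (jdx_before H).
  - by move: Hi; rewrite ltnS leqNgt H.
  - by rewrite H jdx_at.
have Hjr : jdx r y = r.-1.
  by apply/eqP; rewrite eqn_leq jdx_le leqNgt Hj.
have Hi' : i < jdx r y by rewrite Hjr.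
by rewrite (jdx_before Hi') (ltn_eqF Hi').
Qed.

Definition S' (x : cantor_space) : cantor_space :=
  let w := pre x in let r := size (ch w) in let y := sh m x in
  let j := jdx r y in
  if r == 0 then S (ext w) else app (nth w (ch w) j) (sh (cons r j) y).

Lemma nth_ch_mem (w : V) j : j <= (size (ch w)).-1 -> size (ch w) != 0 ->
  nth w (ch w) j \in ch w.
Proof.
move=> Hj Hr; apply: mem_nth; apply: (leq_ltn_trans Hj).
by rewrite prednK // lt0n.
Qed.

Lemma S'_pref x : cyl (S x) n (S' x).
Proof.
move=> i Hi; rewrite /S' /=; case: ifPn => Hr.
  by rewrite (Sunif (ext_cyl x) Hi).
have Hm := nth_ch_mem (jdx_le _ (sh m x)) Hr.
rewrite /app (leq_trans Hi hnm) parP //.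
by move: Hm; rewrite mem_ch => /eqP ->; rewrite (Sunif (ext_cyl x) Hi).
Qed.

Lemma S'_surj z : exists x, S' x = z.
Proof.
set v := pre z; set t := sh m z; set w := par v.
have vw : v \in ch w by rewrite mem_ch.
set r := size (ch w); set j := index v (ch w).
have Hjr : j < r by rewrite index_mem.
have Hr : r != 0 by rewrite -lt0n (leq_ltn_trans _ Hjr).
have Hj1 : j <= r.-1 by rewrite -ltnS prednK // lt0n.
set c := cons r j.
pose y : cantor_space := fun i => if i < c then i == j else t (i - c).
have Jy : jdx r y = j.
  apply: jdx_char => //.
    move=> i Hi; rewrite /y /c /cons.
    have -> : i < (if j < r.-1 then j.+1 else r.-1).
      by case: ifP => _; [exact: ltnW| exact: leq_trans Hi Hj1].
    by rewrite ltn_eqF.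
  by move=> Hj; rewrite /y /c /cons Hj ltnSn eqxx.
exists (app w y); rewrite /S' pre_app -/r (negbTE Hr).
have -> : sh m (app w y) = y by rewrite sh_app0.
rewrite Jy nth_index // -/c.
have -> : sh c y = t.
  by apply: funext => i; rewrite /sh /y ltnNge leq_addl /= addnK.
by rewrite app_pre.
Qed.

Lemma S'_cont : continuous S'.
Proof.
apply: cyl_cont => x N; exists (m + B + N) => y Hy i Hi.
move: Hy; rewrite /cyl /= => Hy.
have Hpre : pre y = pre x by apply/esym/pre_eq => k Hk; apply: Hy; rewrite -addnA ltn_addr.
have Hsh k : k < B + N -> sh m y k = sh m x k.
  by move=> Hk; rewrite /sh Hy // addnC -addnA ltn_add2l.
rewrite /S' /= Hpre; case: ifPn => // Hr.
have Hle : (size (ch (pre x))).-1 <= B.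
  by apply: leq_trans (leq_pred _) (size_ch _).
have -> : jdx (size (ch (pre x))) (sh m y) = jdx (size (ch (pre x))) (sh m x).
  apply: jdx_eq => k Hk; apply: Hsh.
  by apply: leq_trans Hk (leq_trans Hle (leq_addr _ _)).
rewrite /app; case: ifP => // Him.
set c := cons _ _.
have Hc : c <= B := leq_trans (cons_le (jdx_le _ _)) Hle.
rewrite /sh Hy //.
move/negbT: Him; rewrite -leqNgt => Him.
lia.
Qed.

Definition jj (w v : V) := index v (ch w).
Definition cc (w v : V) := cons (size (ch w)) (jj w v).

Lemma stepL x : size (ch (pre x)) != 0 ->
  [/\ par (pre (S' x)) = pre x,
      sh m (S' x) = sh (cc (pre x) (pre (S' x))) (sh m x) &
      forall i, i < cc (pre x) (pre (S' x)) ->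
        sh m x i = (i == jj (pre x) (pre (S' x)))].
Proof.
move=> Hr.
have Hm := nth_ch_mem (jdx_le _ (sh m x)) Hr.
have Hlt : jdx (size (ch (pre x))) (sh m x) < size (ch (pre x)).
  by apply: leq_ltn_trans (jdx_le _ _) _; rewrite prednK // lt0n.
have E : pre (S' x) = nth (pre x) (ch (pre x)) (jdx (size (ch (pre x))) (sh m x)).
  by rewrite /S' /= (negbTE Hr) pre_app.
have Jj : jj (pre x) (pre (S' x)) = jdx (size (ch (pre x))) (sh m x).
  by rewrite /jj E index_uniq // uniq_ch.
split.
- by move: Hm; rewrite E mem_ch => /eqP.
- by rewrite /cc Jj /S' /= (negbTE Hr) sh_app0.
- by move=> i; rewrite /cc Jj; exact: pat.
Qed.

Lemma claimA x : (forall t, size (ch (pre (iter t S' x))) != 0) -> Per S' x.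
Proof.
move=> H.
pose w t := pre (iter t S' x).
pose y t := sh m (iter t S' x).
have step t : [/\ par (w t.+1) = w t, y t.+1 = sh (cc (w t) (w t.+1)) (y t) &
    forall i, i < cc (w t) (w t.+1) -> y t i = (i == jj (w t) (w t.+1))].
  by rewrite /w /y iterS; exact: stepL.
have sp1 t : par (w t.+1) = w t by case: (step t).
have sp2 t : y t.+1 = sh (cc (w t) (w t.+1)) (y t) by case: (step t).
have sp3 t i : i < cc (w t) (w t.+1) -> y t i = (i == jj (w t) (w t.+1)).
  by case: (step t) => _ _; apply.
have wpar t k : w t = iter k par (w (t + k)).
  elim: k => [|k IH]; first by rewrite addn0.
  by rewrite IH iterSr addnS sp1.
pose NV := #|{: V}|.
have cyc t : exists L, [/\ 0 < L, L <= NV & iter L par (w t) = w t].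
  have [k [l [tk kl lt E]]] := pigeon w t.
  exists (l - k); split; first by rewrite subn_gt0.
    by rewrite leq_subLR; apply: leq_trans lt _; rewrite leq_add2r.
  have E1 : w t = iter (k - t) par (w k) by have := wpar t (k - t); rewrite subnKC.
  have E2 : w (t + (l - k)) = iter (k - t) par (w l).
    have Hl : t + (l - k) + (k - t) = l by lia.
    by have := wpar (t + (l - k)) (k - t); rewrite Hl.
  have E3 : w (t + (l - k)) = w t by rewrite E1 E -E2.
  by rewrite -[in LHS]E3 -wpar.
pose M := NV`!.
have fixM t : iter M par (w t) = w t.
  have [L [L0 LN HL]] := cyc t.
  have /dvdnP [q Hq] : L %| M by apply: dvdn_fact; rewrite L0.
  rewrite Hq mulnC; elim: q {Hq} => [|q IH]; first by rewrite muln0.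
  by rewrite mulnS iterD IH HL.
have wper t : w (t + M) = w t.
  by rewrite [RHS](wpar t M) fixM.
pose ct t := cc (w t) (w t.+1).
pose jt t := jj (w t) (w t.+1).
have ctper t : ct (t + M) = ct t by rewrite /ct -addSn !wper.
have jtper t : jt (t + M) = jt t by rewrite /jt -addSn !wper.
have yS t : y t = sh (sumf ct 0 t) (y 0).
  elim: t => [|t IH]; first by rewrite sh0.
  by rewrite sp2 IH sh_sh sumf_S.
have claimC k : forall t i, i < sumf ct t k -> y t i = y (t + M) i.
  elim: k => [|k IH] t i //= Hi.
  case: (ltnP i (ct t)) => Hc.
    rewrite sp3 // sp3; last by rewrite -/(ct _) ctper.
    by rewrite -/(jt _) -/(jt _) jtper.
  have Ey s j : ct s <= j -> y s j = y s.+1 (j - ct s).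
    by move=> Hj; rewrite sp2 /sh -/(ct s) subnK.
  rewrite (Ey t i Hc) (Ey (t + M) i) ?ctper // -addSn.
  by apply: IH; rewrite ltn_subLR.
have yM : y M = y 0.
  case: (posnP (sumf ct 0 M)) => HD.
    by rewrite yS HD sh0.
  apply: funext => i; symmetry.
  have := claimC (i.+1 * M) 0 i; rewrite add0n; apply.
  by rewrite sumf_mul // leq_pmulr.
have xM : iter M S' x = x.
  have E1 := app_pre (iter M S' x).
  have E2 := app_pre (iter 0 S' x).
  rewrite -/(w M) -/(y M) yM in E1.
  have := wper 0; rewrite add0n => E3.
  by rewrite -E1 E3 /w /y E2.
exists 0, M; split; first exact: fact_gt0.
by rewrite addn0 xM.
Qed.

Lemma S'_fp x : finally_periodic S' x.
Proof.
have leafE z : size (ch (pre z)) == 0 -> S' z = S (ext (pre z)).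
  by move=> Hz; rewrite /S' /= Hz.
have HP : forall x, Per S' x.
  apply: (per_all (Z := fun w : V => S (ext w))) => z.
  case: (pselect (forall t, size (ch (pre (iter t S' z))) != 0)) => H.
    by left; exact: claimA.
  right; move: H => /existsNP [t /negP/negbNE Ht].
  by exists t, (pre (iter t S' z)); rewrite iterS leafE.
have [j [N [N0 E]]] := HP x; exists j.+1, N; split => //.
by rewrite addnS !iterS E.
Qed.

End Construction.

Lemma construction (S : cantor_space -> cantor_space) n m : n <= m ->
  (forall y, exists x, S x = y) ->
  (forall a b, cyl a m b -> cyl (S a) n (S b)) ->
  exists S' : cantor_space -> cantor_space,
    [/\ continuous S', forall y, exists x, S' x = y,
        forall x, finally_periodic S' x & forall x, cyl (S x) n (S' x)].
Proof.
move=> hnm Ssurj Sunif; exists (S' hnm Ssurj Sunif); split.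
- exact: S'_cont.
- exact: S'_surj.
- exact: S'_fp.
- exact: S'_pref.
Qed.

Local Open Scope ring_scope.

Definition pK (R : realType) (K : pseudoMetricType R) (x : K) : Type := K.
HB.instance Definition _ (R : realType) (K : pseudoMetricType R) (x : K) :=
  PseudoMetric.on (pK x).
HB.instance Definition _ (R : realType) (K : pseudoMetricType R) (x : K) :=
  isPointed.Build (pK x) x.

Unset Implicit Arguments.

Theorem theorem1p1 (R : realType) (K : pseudoMetricType R) (d : K -> K -> R)
  (hd : is_metric_of d) (hK : cantor_set K)
  (T : K -> K) (hT : endomorphism T) (eps : R) (heps : 0 < eps) :
  exists T' : K -> K,
    [/\ endomorphism T',
        (exists x0 : K, (forall x : K, d (T x) (T' x) <= d (T x0) (T' x0))
                        /\ d (T x0) (T' x0) < eps) &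
        (forall x : K, finally_periodic T' x)].
Proof.
case: hd => d0 dsym dtri dball.
case: hK => -[x0 _] tdK pfK cK.
case: hT => Tc Ts.
have dge0 x y : 0 <= d x y.
  have := dtri x y x; rewrite (proj2 (d0 x x) erefl) (dsym y x).
  lra.
have hausK : hausdorff_space K.
  rewrite ball_hausdorff => a b ab.
  have dab : 0 < d a b.
    rewrite lt_def dge0 andbT; apply/eqP => /d0 E; by rewrite E eqxx in ab.
  have r0 : 0 < d a b / 2 by rewrite divr_gt0.
  exists (PosNum r0, PosNum r0) => /=; apply/eqP; apply/seteqP; split => // z [].
  rewrite !dball /= => h1 h2.
  have := dtri a z b; rewrite (dsym z b); lra.
have zdK : zero_dimensional K := td_zd hausK cK tdK.
have clK : cantor_like (pK x0) by split.
have [f [fc fcl]] := homeomorphism_cantor_like clK.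
pose F : cantor_space -> K := fun a => f a.
pose G : K -> cantor_space := fun y => (f^-1)%FUN y.
have FG y : F (G y) = y by rewrite /F /G invK // in_setT.
have GF a : G (F a) = a by rewrite /F /G funK // in_setT.
have Fc : continuous F := fc.
have Gc : continuous G.
  apply/continuous_closedP => A clA.
  have -> : G @^-1` A = [set f x | x in A].
    apply/seteqP; split => y.
      by move=> Ay; exists (G y) => //; rewrite -[RHS]FG.
    by move=> [a Aa <-]; rewrite /= -/(F a) GF.
  exact: fcl.
pose S := G \o T \o F.
have Sc : continuous S.
  by move=> a; exact: (continuous_comp (continuous_comp (Fc a) (Tc (F a))) (Gc _)).
have Ss : forall y, exists x, S x = y.
  move=> y; have [k Hk] := Ts (F y); exists (G k).
  by rewrite /S /= FG Hk GF.
have e2 : 0 < eps / 2 by rewrite divr_gt0.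
have hE : forall y : K, nbhs y (fun b => d y b < eps / 2).
  by move=> y; have := nbhsx_ballx y (eps / 2) e2; rewrite dball.
have [n Hn] := cyl_unif Fc hE.
have HF a b : cyl a n b -> d (F a) (F b) < eps.
  move=> /Hn [c [h1 h2]]; have := dtri (F a) (F c) (F b); rewrite (dsym (F a) (F c)); lra.
have [m0 Hm0] := cyl_unif Sc (fun y => cyl_nbhs y n).
pose m := maxn m0 n.
have HS a b : cyl a m b -> cyl (S a) n (S b).
  move=> Hab; have [c [h1 h2]] : exists c, cyl (S c) n (S a) /\ cyl (S c) n (S b).
    by apply: Hm0 => i Hi; apply: Hab; apply: leq_trans Hi (leq_maxl _ _).
  by move=> i Hi; rewrite h2 // h1.
have [S' [S'c S's S'fp S'p]] := construction (leq_maxr m0 n) Ss HS.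
pose T' := F \o S' \o G.
have T'c : continuous T'.
  by move=> a; exact: (continuous_comp (continuous_comp (Gc a) (S'c (G a))) (Fc _)).
have Tdist x : d (T x) (T' x) < eps.
  have -> : T x = F (S (G x)) by rewrite /S /= FG FG.
  exact: HF.
have iterT k x : iter k T' x = F (iter k S' (G x)).
  elim: k => [|k IH] /=; first by rewrite FG.
  by rewrite IH /T' /= GF.
pose phi x := d (T x) (T' x).
have phic : continuous phi.
  move=> x A /nbhs_ballP [e /= e0 HeA].
  have e20 : 0 < e / 2 by rewrite divr_gt0.
  have N1 : nbhs x (T @^-1` ball (T x) (e / 2)) := Tc x _ (nbhsx_ballx _ _ e20).
  have N2 : nbhs x (T' @^-1` ball (T' x) (e / 2)) := T'c x _ (nbhsx_ballx _ _ e20).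
  apply: filterS (filterI N1 N2) => z [] /=.
  rewrite !dball /= => b1 b2; apply: HeA.
  have t1 := dtri (T x) (T z) (T' x).
  have t2 := dtri (T z) (T' z) (T' x).
  have t3 := dtri (T z) (T x) (T' z).
  have t4 := dtri (T x) (T' x) (T' z).
  rewrite /phi (dsym (T z) (T x)) (dsym (T' z) (T' x)) in t1 t2 t3 t4 *.
  have h1 : phi x - e < phi z by rewrite /phi; lra.
  have h2 : phi z < phi x + e by rewrite /phi; lra.
  rewrite /ball /=; by rewrite ltr_distlC h1 h2.
have [c _ Hc] := compact_EVT_max (A := [set: K]) (f := phi) (ex_intro _ x0 I) cK
  (continuous_subspaceT phic).
exists T'; split.
- by split => // y; have [a Ha] := S's (G y); exists (F a); rewrite /T' /= GF Ha FG.
- exists c; split; last exact: Tdist.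
  by move=> x; apply: Hc; rewrite in_setT.
- move=> x; have [j [N [j0 [N0 E]]]] := S'fp (G x).
  by exists j, N; split => //; rewrite !iterT E.
Qed.
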